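(* Let $k$ be an algebraically closed field of characteristic zero, $n\ge 2$, and $q_{ij}\in k^\times$ ($1\le i,j\le n$) $n$-th roots of unity with $q_{ii}=q_{ij}q_{ji}=1$. Let $B_n=k\langle x_1,\dots,x_n\rangle/(x_ix_j-q_{ij}x_jx_i)_{i,j}$. Then the abstract Hilbert scheme $\mathrm{Hilb}^1(B_n)$ is isomorphic either to $\mathbb{P}^{n-1}$ or to a union of some faces of the fundamental $(n-1)$-simplex of $\mathbb{P}^{n-1}$ (the coordinate linear subspaces) which contains all the coordinate lines $\mathbb{P}^1$ forming the $1$-faces. In the most generic case (when $q_{ij}q_{jl}q_{li}\neq 1$ for all pairwise distinct $i,j,l$), it is the $1$-skeleton, i.e. the union of all coordinate lines $\mathbb{P}^1\subset\mathbb{P}^{n-1}$.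
   Context: For a graded algebra $A$ generated in degree $1$, a $1$-point module is a graded right $A$-module $M$ generated in degree $0$, cyclic (a quotient of $A$), with Hilbert series $1/(1-t)$. $\mathrm{Hilb}^1(A)$ is the set of isomorphism classes of $1$-point modules. For $A=k\langle x_1,\dots,x_n\rangle/I$, a point module with basis $m_i\in M_i$ and $m_ix_j=\xi_{i,j}m_{i+1}$ corresponds to a sequence of points $[\xi_{i,1}:\dots:\xi_{i,n}]\in\mathbb{P}^{n-1}$, $i\ge0$, satisfying the relations of $I$; $\mathrm{Hilb}^1(A)$ is identified with the inverse limit of the projections of this solution set onto the first finitely many factors of $\prod_{i\ge0}\mathbb{P}^{n-1}$. *)

(* Defs.v *)
From HB Require Import structures.
From mathcomp Require Import all_boot all_order all_algebra all_field.
Set Implicit Arguments. Unset Strict Implicit. Unset Printing Implicit Defensive.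
Import Order.TTheory GRing.Theory Num.Theory.
Local Open Scope ring_scope.

Section PointModules.
Variables (k : fieldType) (n : nat).

(* A vector of homogeneous coordinates of a point of P^{n-1}(k). *)
Definition nonzero_vec (p : 'I_n -> k) : Prop := exists i, p i != 0.

Definition proj_eq (p p' : 'I_n -> k) : Prop :=
  exists2 c : k, c != 0 & forall i, p' i = c * p i.

(* The defining relations x_a x_b - q_ab x_b x_a of B_n, evaluated on a
   point module with m_i x_j = xi_{i,j} m_{i+1}: the coefficient of m_{i+2}
   in m_i (x_a x_b - q_ab x_b x_a) must vanish. *)
Definition skew_rel (q : 'I_n -> 'I_n -> k) (p p' : 'I_n -> k) : Prop :=
  forall a b, p a * p' b = q a b * (p b * p' a).

(* A point module of B_n: a sequence of points (p_i)_{i>=0} of P^{n-1}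
   satisfying the relations of B_n (an element of the inverse limit). *)
Definition point_seq (q : 'I_n -> 'I_n -> k) (xi : nat -> 'I_n -> k) : Prop :=
  forall m, nonzero_vec (xi m) /\ skew_rel q (xi m) (xi m.+1).

(* The image of Hilb^1(B_n) under the projection to the first factor P^{n-1}. *)
Definition hilb1_first (q : 'I_n -> 'I_n -> k) (p : 'I_n -> k) : Prop :=
  exists2 xi, point_seq q xi & xi 0%N = p.

(* Support of a coordinate vector: the smallest face (coordinate linear
   subspace) of the fundamental simplex containing the point. *)
Definition supp (p : 'I_n -> k) : {set 'I_n} := [set i | p i != 0].

End PointModules.

(* Main.v *)
Require Import Defs.
From HB Require Import structures.
From mathcomp Require Import all_boot all_order all_algebra all_field.
From mathcomp Require Import ring.
Set Implicit Arguments. Unset Strict Implicit.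
Import Order.TTheory GRing.Theory Num.Theory.
Local Open Scope ring_scope.

Section Helpers.
Variables (k : fieldType) (n : nat) (q : 'I_n -> 'I_n -> k).
Hypothesis qii : forall i, q i i = 1.
Hypothesis qinv : forall i j, q i j * q j i = 1.

Lemma q_neq0 i j : q i j != 0.
Proof. apply/negP => /eqP h; have := qinv i j; rewrite h mul0r => /eqP; by rewrite eq_sym oner_eq0. Qed.

Lemma next_form p p' a0 : skew_rel q p p' -> p a0 != 0 ->
  forall b, p' b = (p' a0 / p a0) * (q a0 b * p b).
Proof.
move=> hr hp b; have := hr a0 b => e.
apply: (mulfI hp); rewrite e; field; exact: hp.
Qed.

Lemma next_nz p p' a0 : skew_rel q p p' -> p a0 != 0 -> nonzero_vec p' -> p' a0 != 0.
Proof.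
move=> hr hp [b hb]; apply/negP => /eqP h0; move: hb.
by rewrite (next_form hr hp b) h0 mul0r mul0r eqxx.
Qed.

Definition goodb (S : {set 'I_n}) : bool :=
  [forall a in S, forall b in S, forall c in S, q a b * q b c * q c a == 1].

Lemma goodP (S : {set 'I_n}) : reflect (forall a b c, a \in S -> b \in S -> c \in S ->
   q a b * q b c * q c a = 1) (goodb S).
Proof.
apply: (iffP idP).
  move=> /forall_inP h a b c ha hb hc.
  by move: (h a ha) => /forall_inP /(_ b hb) /forall_inP /(_ c hc) /eqP.
move=> h; apply/forall_inP => a ha; apply/forall_inP => b hb;
 apply/forall_inP => c hc; apply/eqP; exact: h.
Qed.

Lemma triv3 a b c : [|| a == b, b == c | c == a] -> q a b * q b c * q c a = 1.
Proof.
by case/or3P => /eqP ->; rewrite ?qii ?mul1r ?mulr1 ?qinv.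
Qed.

Lemma hilbP p : nonzero_vec p -> hilb1_first q p <-> goodb (supp p).
Proof.
move=> [a0 ha0]; split.
  case=> xi hxi e0; have [_ hr] := hxi 0%N; rewrite e0 in hr.
  have [hnz1 _] := hxi 1%N.
  have h1 := next_nz hr ha0 hnz1.
  have key : forall x y, x \in supp p -> y \in supp p -> q a0 y = q x y * q a0 x.
    move=> x y; rewrite !inE => hx hy.
    have := hr x y; rewrite (next_form hr ha0 x) (next_form hr ha0 y) => e.
    have hc : xi 1%N a0 / p a0 != 0 by rewrite mulf_neq0 // invr_eq0.
    apply: (mulfI (mulf_neq0 hc (mulf_neq0 hx hy))).
    transitivity (p x * (xi 1%N a0 / p a0 * (q a0 y * p y))); first by ring.
    by rewrite e; ring.
  apply/goodP => a b c ha hb hc.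
  have rz := q_neq0 a0.
  rewrite (_ : q a b = q a0 b / q a0 a); last by rewrite (key a b) // mulfK.
  rewrite (_ : q b c = q a0 c / q a0 b); last by rewrite (key b c) // mulfK.
  rewrite (_ : q c a = q a0 a / q a0 c); last by rewrite (key c a) // mulfK.
  by field; rewrite !rz.
move/goodP => hg.
pose xi (m : nat) : 'I_n -> k :=
  if m is 0%N then p else fun b => q a0 b ^+ m * p b.
have xiE m b : xi m b = q a0 b ^+ m * p b by case: m => //=; rewrite expr0 mul1r.
exists xi => // m; split.
  by exists a0; rewrite xiE qii expr1n mul1r.
move=> a b; rewrite !xiE.
have [pa|pa] := eqVneq (p a) 0; first by rewrite pa; ring.
have [pb|pb] := eqVneq (p b) 0; first by rewrite pb; ring.
have ha : a \in supp p by rewrite inE.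
have hb : b \in supp p by rewrite inE.
have ha0' : a0 \in supp p by rewrite inE.
have e := hg a0 a b ha0' ha hb.
have e2 : q a0 b = q a0 a * q a b.
  transitivity (q a0 b * (q a0 a * q a b * q b a0)); first by rewrite e mulr1.
  transitivity ((q a0 a * q a b) * (q a0 b * q b a0)); first by ring.
  by rewrite qinv mulr1.
rewrite e2 !exprSr !exprMn; ring.
Qed.

Lemma inj_step p p' r r' : nonzero_vec p -> nonzero_vec p' -> nonzero_vec r' ->
  skew_rel q p p' -> skew_rel q r r' -> proj_eq p r -> proj_eq p' r'.
Proof.
move=> [a0 ha0] hnp' hnr' hp hr [c hc e].
have hra0 : r a0 != 0 by rewrite e mulf_neq0.
have h1 := next_nz hp ha0 hnp'.
have h2 := next_nz hr hra0 hnr'.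
exists ((r' a0 / r a0) * c / (p' a0 / p a0)).
  by rewrite !mulf_neq0 ?invr_eq0 ?mulf_neq0 ?invr_eq0.
move=> i; rewrite (next_form hr hra0 i) (next_form hp ha0 i) e e.
by field; rewrite ?ha0 ?h1 ?hc.
Qed.

Lemma pair_good (i j : 'I_n) : goodb [set i; j].
Proof.
apply/goodP => a b c.
by case/set2P => ->; case/set2P => ->; case/set2P => ->; apply: triv3;
  rewrite !eqxx ?orbT.
Qed.

Lemma good_sub (S T : {set 'I_n}) : S \subset T -> goodb T -> goodb S.
Proof.
move=> /subsetP sST /goodP h; apply/goodP => a b c ha hb hc; apply: h; exact: sST.
Qed.

Lemma three_distinct (S : {set 'I_n}) : (2 < #|S|)%N ->
  exists a b c, [/\ a \in S, b \in S, c \in S & [/\ a != b, b != c & a != c]].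
Proof.
move=> h.
have /card_gt0P [a ha] : (0 < #|S|)%N by apply: leq_trans h.
have h1 : (1 < #|S :\ a|)%N by move: h; rewrite (cardsD1 a S) ha.
have /card_gt0P [b hb] : (0 < #|S :\ a|)%N by apply: leq_trans h1.
have h2 : (0 < #|S :\ a :\ b|)%N by move: h1; rewrite (cardsD1 b (S :\ a)) hb.
have /card_gt0P [c hc] := h2.
move: hb hc => /setD1P [nba hb] /setD1P [ncb /setD1P [nca hc]].
exists a, b, c; split => //; split; by rewrite eq_sym.
Qed.

Lemma card_le2 (S : {set 'I_n}) a b c : (#|S| <= 2)%N -> a \in S -> b \in S -> c \in S ->
  [|| a == b, b == c | c == a].
Proof.
move=> hS ha hb hc; apply/negPn/negP.
rewrite !negb_or => /and3P [nab nbc nca].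
have sub : a |: [set b; c] \subset S.
  apply/subsetP => x; rewrite !inE.
  by case/orP => [/eqP -> // | /orP [] /eqP ->].
have := subset_leq_card sub.
rewrite cardsU1 cards2 !inE negb_or nab eq_sym nca nbc /=.
by move=> h; have := leq_trans h hS.
Qed.
End Helpers.

Theorem proposition3p3 (k : closedFieldType) (n : nat)
    (q : 'I_n -> 'I_n -> k) :
  [pchar k] =i pred0 ->
  (2 <= n)%N ->
  (forall i j, q i j ^+ n = 1) ->
  (forall i, q i i = 1) ->
  (forall i j, q i j * q j i = 1) ->
  (* (1) Hilb^1(B_n) -> P^{n-1} (projection to the first point) is injective *)
  (forall xi eta : nat -> 'I_n -> k,
      point_seq q xi -> point_seq q eta -> proj_eq (xi 0%N) (eta 0%N) ->
      forall m, proj_eq (xi m) (eta m)) /\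
  (* (2) its image is P^{n-1}, or a union of faces containing all 1-faces *)
  ((forall p : 'I_n -> k, nonzero_vec p -> hilb1_first q p) \/
   (exists F : {set {set 'I_n}},
      (forall i j : 'I_n, i != j -> [set i; j] \in F) /\
      (forall p : 'I_n -> k, nonzero_vec p ->
         (hilb1_first q p <-> exists2 S, S \in F & supp p \subset S)))) /\
  (* (3) generic case: the image is the 1-skeleton *)
  ((forall i j l : 'I_n, i != j -> j != l -> i != l ->
        q i j * q j l * q l i != 1) ->
   forall p : 'I_n -> k, nonzero_vec p ->
     (hilb1_first q p <-> (#|supp p| <= 2)%N)).
Proof.
move=> _ _ _ qii qinv.
split.
  move=> xi eta hxi heta h0; elim => // m IH.
  have [hn1 r1] := hxi m; have [hn2 r2] := heta m.
  exact: (inj_step hn1 (hxi m.+1).1 (heta m.+1).1 r1 r2 IH).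
split.
  right; exists [set S | goodb q S]; split.
    by move=> i j _; rewrite inE; exact: pair_good.
  move=> p hp; rewrite (hilbP qii qinv hp); split.
    by move=> h; exists (supp p) => //; rewrite inE.
  by case=> S; rewrite inE => hS sub; exact: good_sub sub hS.
move=> gen p hp; rewrite (hilbP qii qinv hp); split.
  move=> /goodP h; rewrite leqNgt; apply/negP.
  move=> /three_distinct [a [b [c [ha hb hc [nab nbc nac]]]]].
  by have := gen a b c nab nbc nac; rewrite h // eqxx.
move=> hle; apply/goodP => a b c ha hb hc; apply: (triv3 qii qinv).
exact: card_le2 hle ha hb hc.
Qed.
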